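(* The variety of super-paraorthomodular lattices is not the largest subvariety of the variety of pseudo-Kleene lattices that contains no member isomorphic to $\mathbf B_6$ or to $\mathbf B_8$; that is, there is a variety $\mathcal V$ of pseudo-Kleene lattices containing no member isomorphic to $\mathbf B_6$ or to $\mathbf B_8$ such that $\mathcal V$ is not contained in the variety of super-paraorthomodular lattices.
   Context: A pseudo-Kleene lattice is an algebra $(A,\land,\lor,{}',0,1)$ that is a bounded lattice with an antitone involution ${}'$ ($x\leq y\Rightarrow y'\leq x'$, $x''=x$) satisfying $x\land x'\leq y\lor y'$. It is super-paraorthomodular if for all $x,y$: (SP1) $x\leq y$ and $x'\land y=(x\land x')\lor(y\land y')$ imply $y\land(x\lor x')=x\lor(y\land y')$; (SP2) $x\leq y$ implies $(x\land x')\lor(y\land y')=(x'\land y)\land(x'\land y)'$; super-paraorthomodular lattices form a variety. $\mathbf B_6$: the pseudo-Kleene lattice with elements $0,x,y,y',x',1$, covers $0\prec x\prec y\prec 1$, $0\prec y'\prec x'\prec 1$, involution $u\leftrightarrow u'$, $0\leftrightarrow1$. $\mathbf B_8$: elements $0,z',x,y,y',x',z,1$, covers $0\prec z'$, $z'\prec x\prec y\prec z$, $z'\prec y'\prec x'\prec z$, $z\prec 1$, involution $u\leftrightarrow u'$, $0\leftrightarrow 1$. *)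

(* Defs.v *)
From Stdlib Require Import List.

Record Alg := {
  car :> Type;
  ameet : car -> car -> car;
  ajoin : car -> car -> car;
  aneg : car -> car;
  azero : car;
  aone : car
}.

Arguments ameet {a} _ _.
Arguments ajoin {a} _ _.
Arguments aneg {a} _.
Arguments azero {a}.
Arguments aone {a}.

Definition ale {A : Alg} (x y : A) : Prop := ameet x y = x.

Definition is_PKL (A : Alg) : Prop :=
  (forall x y : A, ameet x y = ameet y x) /\
  (forall x y z : A, ameet x (ameet y z) = ameet (ameet x y) z) /\
  (forall x y : A, ajoin x y = ajoin y x) /\
  (forall x y z : A, ajoin x (ajoin y z) = ajoin (ajoin x y) z) /\
  (forall x y : A, ameet x (ajoin x y) = x) /\
  (forall x y : A, ajoin x (ameet x y) = x) /\
  (forall x : A, ameet azero x = azero) /\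
  (forall x : A, ajoin aone x = aone) /\
  (forall x : A, aneg (aneg x) = x) /\
  (forall x y : A, ale x y -> ale (aneg y) (aneg x)) /\
  (forall x y : A, ale (ameet x (aneg x)) (ajoin y (aneg y))).

Definition is_SPOML (A : Alg) : Prop :=
  (forall x y : A, ale x y ->
     ameet (aneg x) y = ajoin (ameet x (aneg x)) (ameet y (aneg y)) ->
     ameet y (ajoin x (aneg x)) = ajoin x (ameet y (aneg y))) /\
  (forall x y : A, ale x y ->
     ajoin (ameet x (aneg x)) (ameet y (aneg y)) =
     ameet (ameet (aneg x) y) (aneg (ameet (aneg x) y))).

Definition iso (A B : Alg) : Prop :=
  exists (f : A -> B) (g : B -> A),
    (forall a, g (f a) = a) /\ (forall b, f (g b) = b) /\
    (forall x y, f (ameet x y) = ameet (f x) (f y)) /\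
    (forall x y, f (ajoin x y) = ajoin (f x) (f y)) /\
    (forall x, f (aneg x) = aneg (f x)) /\
    f azero = azero /\ f aone = aone.

(* Terms and equations; a variety is the class of models of a set of
   equations (Birkhoff). *)
Inductive term : Type :=
| tVar : nat -> term
| tMeet : term -> term -> term
| tJoin : term -> term -> term
| tNeg : term -> term
| tZero : term
| tOne : term.

Fixpoint teval (A : Alg) (v : nat -> A) (t : term) : A :=
  match t with
  | tVar n => v n
  | tMeet s u => ameet (teval A v s) (teval A v u)
  | tJoin s u => ajoin (teval A v s) (teval A v u)
  | tNeg s => aneg (teval A v s)
  | tZero => azero
  | tOne => aone
  end.

Definition models (E : term * term -> Prop) (A : Alg) : Prop :=
  forall e, E e -> forall v : nat -> A, teval A v (fst e) = teval A v (snd e).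

(* ---- B6: 0 < x < y < 1, 0 < y' < x' < 1 ---- *)
Inductive b6 := b6_0 | b6_x | b6_y | b6_y' | b6_x' | b6_1.

(* side: true = left chain {x,y}, false = right chain {y',x'}; level 1 or 2 *)
Definition b6_side (a : b6) : bool :=
  match a with b6_x | b6_y => true | _ => false end.
Definition b6_lvl (a : b6) : nat :=
  match a with b6_x | b6_y' => 1 | b6_y | b6_x' => 2 | _ => 0 end.

Definition b6_meet (a b : b6) : b6 :=
  match a, b with
  | b6_0, _ | _, b6_0 => b6_0
  | b6_1, c | c, b6_1 => c
  | _, _ => if Bool.eqb (b6_side a) (b6_side b)
            then (if Nat.leb (b6_lvl a) (b6_lvl b) then a else b)
            else b6_0
  end.

Definition b6_join (a b : b6) : b6 :=
  match a, b with
  | b6_1, _ | _, b6_1 => b6_1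
  | b6_0, c | c, b6_0 => c
  | _, _ => if Bool.eqb (b6_side a) (b6_side b)
            then (if Nat.leb (b6_lvl a) (b6_lvl b) then b else a)
            else b6_1
  end.

Definition b6_neg (a : b6) : b6 :=
  match a with
  | b6_0 => b6_1 | b6_1 => b6_0
  | b6_x => b6_x' | b6_x' => b6_x
  | b6_y => b6_y' | b6_y' => b6_y
  end.

Definition B6 : Alg := {| car := b6; ameet := b6_meet; ajoin := b6_join;
  aneg := b6_neg; azero := b6_0; aone := b6_1 |}.

(* ---- B8: 0 < z' < x < y < z < 1, z' < y' < x' < z ---- *)
Inductive b8 := b8_0 | b8_z' | b8_x | b8_y | b8_y' | b8_x' | b8_z | b8_1.

Definition b8_side (a : b8) : bool :=
  match a with b8_x | b8_y => true | _ => false end.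
Definition b8_lvl (a : b8) : nat :=
  match a with b8_x | b8_y' => 1 | b8_y | b8_x' => 2 | _ => 0 end.

Definition b8_meet (a b : b8) : b8 :=
  match a, b with
  | b8_0, _ | _, b8_0 => b8_0
  | b8_1, c | c, b8_1 => c
  | b8_z', _ | _, b8_z' => b8_z'
  | b8_z, c | c, b8_z => c
  | _, _ => if Bool.eqb (b8_side a) (b8_side b)
            then (if Nat.leb (b8_lvl a) (b8_lvl b) then a else b)
            else b8_z'
  end.

Definition b8_join (a b : b8) : b8 :=
  match a, b with
  | b8_1, _ | _, b8_1 => b8_1
  | b8_0, c | c, b8_0 => c
  | b8_z, _ | _, b8_z => b8_z
  | b8_z', c | c, b8_z' => c
  | _, _ => if Bool.eqb (b8_side a) (b8_side b)
            then (if Nat.leb (b8_lvl a) (b8_lvl b) then b else a)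
            else b8_z
  end.

Definition b8_neg (a : b8) : b8 :=
  match a with
  | b8_0 => b8_1 | b8_1 => b8_0
  | b8_z => b8_z' | b8_z' => b8_z
  | b8_x => b8_x' | b8_x' => b8_x
  | b8_y => b8_y' | b8_y' => b8_y
  end.

Definition B8 : Alg := {| car := b8; ameet := b8_meet; ajoin := b8_join;
  aneg := b8_neg; azero := b8_0; aone := b8_1 |}.

Example b6_chk1 : b6_meet b6_y b6_x' = b6_0 := eq_refl.
Example b6_chk2 : b6_join b6_x b6_y = b6_y := eq_refl.
Example b8_chk1 : b8_meet b8_y b8_x' = b8_z' := eq_refl.
Example b8_chk2 : b8_join b8_x b8_y' = b8_z := eq_refl.
Example b8_chk3 : b8_meet b8_z b8_x = b8_x := eq_refl.

(* Main.v *)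
Require Import Defs.

Inductive a0 := e0 | e1 | e2 | e3 | e4 | e5 | e6 | e7.

Definition a0_meet (a b : a0) : a0 :=
  match a, b with
  | e0, e0 => e0
  | e0, e1 => e0
  | e0, e2 => e0
  | e0, e3 => e0
  | e0, e4 => e0
  | e0, e5 => e0
  | e0, e6 => e0
  | e0, e7 => e0
  | e1, e0 => e0
  | e1, e1 => e1
  | e1, e2 => e1
  | e1, e3 => e0
  | e1, e4 => e1
  | e1, e5 => e1
  | e1, e6 => e1
  | e1, e7 => e1
  | e2, e0 => e0
  | e2, e1 => e1
  | e2, e2 => e2
  | e2, e3 => e0
  | e2, e4 => e2
  | e2, e5 => e2
  | e2, e6 => e2
  | e2, e7 => e2
  | e3, e0 => e0
  | e3, e1 => e0
  | e3, e2 => e0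
  | e3, e3 => e3
  | e3, e4 => e3
  | e3, e5 => e3
  | e3, e6 => e0
  | e3, e7 => e3
  | e4, e0 => e0
  | e4, e1 => e1
  | e4, e2 => e2
  | e4, e3 => e3
  | e4, e4 => e4
  | e4, e5 => e4
  | e4, e6 => e2
  | e4, e7 => e4
  | e5, e0 => e0
  | e5, e1 => e1
  | e5, e2 => e2
  | e5, e3 => e3
  | e5, e4 => e4
  | e5, e5 => e5
  | e5, e6 => e2
  | e5, e7 => e5
  | e6, e0 => e0
  | e6, e1 => e1
  | e6, e2 => e2
  | e6, e3 => e0
  | e6, e4 => e2
  | e6, e5 => e2
  | e6, e6 => e6
  | e6, e7 => e6
  | e7, e0 => e0
  | e7, e1 => e1
  | e7, e2 => e2
  | e7, e3 => e3
  | e7, e4 => e4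
  | e7, e5 => e5
  | e7, e6 => e6
  | e7, e7 => e7
  end.

Definition a0_join (a b : a0) : a0 :=
  match a, b with
  | e0, e0 => e0
  | e0, e1 => e1
  | e0, e2 => e2
  | e0, e3 => e3
  | e0, e4 => e4
  | e0, e5 => e5
  | e0, e6 => e6
  | e0, e7 => e7
  | e1, e0 => e1
  | e1, e1 => e1
  | e1, e2 => e2
  | e1, e3 => e4
  | e1, e4 => e4
  | e1, e5 => e5
  | e1, e6 => e6
  | e1, e7 => e7
  | e2, e0 => e2
  | e2, e1 => e2
  | e2, e2 => e2
  | e2, e3 => e4
  | e2, e4 => e4
  | e2, e5 => e5
  | e2, e6 => e6
  | e2, e7 => e7
  | e3, e0 => e3
  | e3, e1 => e4
  | e3, e2 => e4
  | e3, e3 => e3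
  | e3, e4 => e4
  | e3, e5 => e5
  | e3, e6 => e7
  | e3, e7 => e7
  | e4, e0 => e4
  | e4, e1 => e4
  | e4, e2 => e4
  | e4, e3 => e4
  | e4, e4 => e4
  | e4, e5 => e5
  | e4, e6 => e7
  | e4, e7 => e7
  | e5, e0 => e5
  | e5, e1 => e5
  | e5, e2 => e5
  | e5, e3 => e5
  | e5, e4 => e5
  | e5, e5 => e5
  | e5, e6 => e7
  | e5, e7 => e7
  | e6, e0 => e6
  | e6, e1 => e6
  | e6, e2 => e6
  | e6, e3 => e7
  | e6, e4 => e7
  | e6, e5 => e7
  | e6, e6 => e6
  | e6, e7 => e7
  | e7, e0 => e7
  | e7, e1 => e7
  | e7, e2 => e7
  | e7, e3 => e7
  | e7, e4 => e7
  | e7, e5 => e7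
  | e7, e6 => e7
  | e7, e7 => e7
  end.

Definition a0_neg (a : a0) : a0 :=
  match a with
  | e0 => e7
  | e1 => e5
  | e2 => e4
  | e3 => e6
  | e4 => e2
  | e5 => e1
  | e6 => e3
  | e7 => e0
  end.

Definition A0 : Alg := {| car := a0; ameet := a0_meet; ajoin := a0_join;
  aneg := a0_neg; azero := e0; aone := e7 |}.

Definition E0 (e : term * term) : Prop :=
  forall v : nat -> A0, teval A0 v (fst e) = teval A0 v (snd e).

Lemma transfer (A : Alg) (l r : term) :
  models E0 A -> (forall v : nat -> A0, teval A0 v l = teval A0 v r) ->
  forall v : nat -> A, teval A v l = teval A v r.
Proof. intros H H0 v. exact (H (l, r) H0 v). Qed.

Definition env {A : Alg} (x y z : A) : nat -> A :=
  fun n => match n with 0 => x | 1 => y | _ => z end.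

Ltac fin1 := let v := fresh "v" in intro v; simpl; destruct (v 0); reflexivity.
Ltac fin2 := let v := fresh "v" in intro v; simpl; destruct (v 0), (v 1); reflexivity.
Ltac fin3 := let v := fresh "v" in intro v; simpl; destruct (v 0), (v 1), (v 2); reflexivity.

Definition X := tVar 0.
Definition Y := tVar 1.
Definition Z := tVar 2.

Lemma E0_PKL (A : Alg) : models E0 A -> is_PKL A.
Proof.
  intro H.
  repeat split.
  - intros x y. exact (transfer A (tMeet X Y) (tMeet Y X) H ltac:(fin2) (env x y x)).
  - intros x y z. exact (transfer A (tMeet X (tMeet Y Z)) (tMeet (tMeet X Y) Z) H ltac:(fin3) (env x y z)).
  - intros x y. exact (transfer A (tJoin X Y) (tJoin Y X) H ltac:(fin2) (env x y x)).
  - intros x y z. exact (transfer A (tJoin X (tJoin Y Z)) (tJoin (tJoin X Y) Z) H ltac:(fin3) (env x y z)).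
  - intros x y. exact (transfer A (tMeet X (tJoin X Y)) X H ltac:(fin2) (env x y x)).
  - intros x y. exact (transfer A (tJoin X (tMeet X Y)) X H ltac:(fin2) (env x y x)).
  - intros x. exact (transfer A (tMeet tZero X) tZero H ltac:(fin1) (env x x x)).
  - intros x. exact (transfer A (tJoin tOne X) tOne H ltac:(fin1) (env x x x)).
  - intros x. exact (transfer A (tNeg (tNeg X)) X H ltac:(fin1) (env x x x)).
  - intros x y Hxy. unfold ale in *.
    pose proof (transfer A (tMeet (tNeg Y) (tNeg (tMeet X Y))) (tNeg Y) H ltac:(fin2) (env x y x)) as K.
    simpl in K. rewrite Hxy in K. exact K.
  - intros x y. unfold ale.
    exact (transfer A (tMeet (tMeet X (tNeg X)) (tJoin Y (tNeg Y))) (tMeet X (tNeg X)) H ltac:(fin2) (env x y x)).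
Qed.

Definition sepL := tMeet X (tJoin (tNeg Y) (tMeet X Y)).
Definition sepR := tMeet X (tJoin (tMeet X Y) (tNeg (tMeet X Y))).

Lemma sep_A0 : forall v : nat -> A0, teval A0 v sepL = teval A0 v sepR.
Proof. fin2. Qed.

Lemma teval_ext (A : Alg) (v w : nat -> A) (t : term) :
  (forall n, v n = w n) -> teval A v t = teval A w t.
Proof. intro H; induction t; simpl; congruence. Qed.

Lemma teval_hom (A B : Alg) (f : A -> B) :
  (forall x y, f (ameet x y) = ameet (f x) (f y)) ->
  (forall x y, f (ajoin x y) = ajoin (f x) (f y)) ->
  (forall x, f (aneg x) = aneg (f x)) ->
  f azero = azero -> f aone = aone ->
  forall v t, f (teval A v t) = teval B (fun n => f (v n)) t.
Proof.
  intros Hm Hj Hn H0 H1 v t; induction t; simpl;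
  try rewrite Hm; try rewrite Hj; try rewrite Hn; congruence.
Qed.

Lemma iso_sep (A B : Alg) : models E0 A -> iso A B ->
  forall w : nat -> B, teval B w sepL = teval B w sepR.
Proof.
  intros H [f [g [Hgf [Hfg [Hm [Hj [Hn [H0 H1]]]]]]]] w.
  pose proof (transfer A sepL sepR H sep_A0 (fun n => g (w n))) as K.
  apply (f_equal f) in K.
  rewrite !(teval_hom A B f Hm Hj Hn H0 H1) in K.
  rewrite !(teval_ext B _ w _ (fun n => Hfg (w n))) in K.
  exact K.
Qed.

Theorem lemma4p4 :
  exists E : term * term -> Prop,
    (forall A : Alg, models E A -> is_PKL A) /\
    (forall A : Alg, models E A -> ~ iso A B6 /\ ~ iso A B8) /\
    (exists A : Alg, models E A /\ ~ is_SPOML A).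
Proof.
  exists E0. split; [exact E0_PKL|]. split.
  - intros A H. split; intro I.
    + pose proof (iso_sep A B6 H I (@env B6 b6_y b6_x' b6_0)) as K.
      vm_compute in K. discriminate K.
    + pose proof (iso_sep A B8 H I (@env B8 b8_y b8_x' b8_0)) as K.
      vm_compute in K. discriminate K.
  - exists A0. split.
    + intros e He v. exact (He v).
    + intros [_ SP2]. specialize (SP2 e3 e5 eq_refl).
      vm_compute in SP2. discriminate SP2.
Qed.
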